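(* Let $\Lambda$ be an ordinal with $2\leq\Lambda\leq\omega$. For each $n\in\Lambda$ let $\delta_n$ be a nonempty family of nonempty subsets of $\omega$ with $\bigcap\delta_n=\varnothing$. Suppose that $\delta_0$ has the finite intersection property and that for each $n\in\Lambda\setminus\{0\}$ there is $\gamma_n\subseteq\mathcal{P}(\omega)$ with $|\gamma_n|\leq\omega$, $\gamma_n$ having the finite intersection property, and $\gamma_n\gg\delta_n$. Then there is a sequence $\langle\alpha_n\rangle_{n\in\Lambda}$ of strictly increasing functions $\alpha_n:\omega\to\omega$ such that: if $k\in\Lambda$ and $A_i\in\{\alpha_i[D]: D\in\delta_i\}$ for all $i\leq k$, then $\bigcap_{i\leq k}A_i$ is infinite.
   Context: Ordinals are von Neumann ordinals ($\Lambda=\{0,1,\dots\}$). A family has the finite intersection property if every finite nonempty subfamily has nonempty intersection. For families $\gamma,\delta$ of sets, $\gamma\gg\delta$ means: for every nonempty $D\in\delta$ there is a nonempty $G\in\gamma$ with $G\subseteq D$. $\alpha[D]$ denotes the image of $D$ under $\alpha$. *)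

(* Defs.v *)
From Stdlib Require Import List Arith.

(* An ordinal Lambda with 2 <= Lambda <= omega: [None] = omega,
   [Some m] = the finite ordinal m (required 2 <= m). *)
Definition ordLam_ok (L : option nat) : Prop :=
  match L with None => True | Some m => 2 <= m end.

Definition inLam (L : option nat) (n : nat) : Prop :=
  match L with None => True | Some m => n < m end.

Definition nonempty_set (D : nat -> Prop) : Prop := exists x, D x.

Definition FIP (F : (nat -> Prop) -> Prop) : Prop :=
  forall l : list (nat -> Prop), l <> nil -> (forall D, In D l -> F D) ->
    exists x, forall D, In D l -> D x.

Definition countable_family (F : (nat -> Prop) -> Prop) : Prop :=
  exists f : nat -> (nat -> Prop), forall G, F G -> exists k, f k = G.

(* gamma >> delta *)
Definition refines (gamma delta : (nat -> Prop) -> Prop) : Prop :=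
  forall D, delta D -> nonempty_set D ->
    exists G, gamma G /\ nonempty_set G /\ forall x, G x -> D x.

Definition strictly_increasing (f : nat -> nat) : Prop :=
  forall a b, a < b -> f a < f b.

Definition image (f : nat -> nat) (D : nat -> Prop) : nat -> Prop :=
  fun y => exists x, D x /\ f x = y.

Definition infinite_set (P : nat -> Prop) : Prop :=
  forall N, exists x, N <= x /\ P x.

(* Main.v *)
Require Import Defs.
From Stdlib Require Import List Arith.
From Stdlib Require Import Lia Classical ClassicalEpsilon Bool.

Definition fmax (l : list nat) : nat := fold_right Nat.max 0 l.

Lemma fmax_ge : forall l a, In a l -> a <= fmax l.
Proof. induction l; simpl; intros b Hb; [contradiction|]. destruct Hb as [->|Hb]; [lia|]. specialize (IHl b Hb); lia. Qed.

Lemma fmax_le : forall l b, (forall a, In a l -> a <= b) -> fmax l <= b.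
Proof. induction l; simpl; intros b Hb; [lia|]. assert (a <= b) by auto. assert (fmax l <= b) by auto. lia. Qed.

Definition gam (delta : nat -> (nat -> Prop) -> Prop) (n : nat) : (nat -> Prop) -> Prop :=
  epsilon (inhabits (fun _ : nat -> Prop => True))
    (fun g => countable_family g /\ FIP g /\ refines g (delta n)).

Definition enum (delta : nat -> (nat -> Prop) -> Prop) (n : nat) : nat -> (nat -> Prop) :=
  epsilon (inhabits (fun _ : nat => fun _ : nat => True))
    (fun f => forall G, gam delta n G -> exists k, f k = G).

Definition Hs delta n m y := forall j, j <= m -> gam delta n (enum delta n j) -> enum delta n j y.

Fixpoint p delta n m : nat :=
  match m with
  | 0 => epsilon (inhabits 0) (fun y => Hs delta n 0 y)
  | S m' => epsilon (inhabits 0) (fun y => S (p delta n m') <= y /\ Hs delta n (S m') y)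
  end.

Definition Sm delta j := fmax (map (fun n => p delta n j) (seq 0 (S j))).

Fixpoint g delta m : nat :=
  match m with
  | 0 => Sm delta 0 + 1
  | S m' => g delta m' + Sm delta (S m') + 1
  end.

Definition e delta i m := g delta m - p delta i m.

Definition term delta i x m :=
  if (i <=? m) && (p delta i m <=? x) then e delta i m else 0.

Definition c delta i x := fmax (map (term delta i x) (seq 0 (S x))).

Definition alpha delta i x := if i =? 0 then g delta x else x + c delta i x.

Lemma g_ge_Sm delta m : Sm delta m <= g delta m.
Proof. destruct m; simpl; lia. Qed.

Lemma g_lt delta m : g delta m < g delta (S m).
Proof. simpl; lia. Qed.

Lemma g_mono delta a b : a < b -> g delta a < g delta b.
Proof. induction b; intros H; [lia|]. pose proof (g_lt delta b). destruct (Nat.eq_dec a b); subst; [lia|]. specialize (IHb ltac:(lia)); lia. Qed.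

Lemma g_ge delta m : m <= g delta m.
Proof. induction m; [lia|]. pose proof (g_lt delta m); lia. Qed.

Lemma p_le_Sm delta n m : n <= m -> p delta n m <= Sm delta m.
Proof. intros H. unfold Sm. apply fmax_ge. apply in_map_iff. exists n. split; auto. apply in_seq; lia. Qed.

Lemma p_le_g delta n m : n <= m -> p delta n m <= g delta m.
Proof. intros H. pose proof (p_le_Sm delta n m H). pose proof (g_ge_Sm delta m). lia. Qed.

Lemma c_step delta i x : c delta i x <= c delta i (S x).
Proof.
  unfold c. apply fmax_le. intros a Ha. apply in_map_iff in Ha as [m [<- Hm]].
  apply in_seq in Hm.
  apply Nat.le_trans with (term delta i (S x) m).
  - unfold term. destruct (Nat.leb_spec i m); destruct (Nat.leb_spec (p delta i m) x);
      destruct (Nat.leb_spec (p delta i m) (S x)); simpl; lia.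
  - apply fmax_ge. apply in_map. apply in_seq. lia.
Qed.

Lemma c_mono delta i x y : x <= y -> c delta i x <= c delta i y.
Proof. induction y; intros H. - assert (x = 0) by lia; subst; lia.
  - destruct (Nat.eq_dec x (S y)); [subst; lia|]. pose proof (c_step delta i y). specialize (IHy ltac:(lia)). lia. Qed.

Lemma alpha_strict delta i : strictly_increasing (alpha delta i).
Proof.
  intros a b H. unfold alpha. destruct (i =? 0). - apply g_mono; auto.
  - pose proof (c_mono delta i a b ltac:(lia)). lia.
Qed.


Lemma p_ge delta i (Hp : forall m, p delta i m < p delta i (S m)) m : m <= p delta i m.
Proof. induction m; [lia|]. specialize (Hp m); lia. Qed.

Lemma p_mono delta i (Hp : forall m, p delta i m < p delta i (S m)) a b :
  a < b -> p delta i a < p delta i b.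
Proof. induction b; intros H; [lia|]. specialize (Hp b). destruct (Nat.eq_dec a b); subst; [lia|].
  specialize (IHb ltac:(lia)); lia. Qed.

Lemma e_step delta i m : i <= m -> e delta i m <= e delta i (S m).
Proof. intros H. unfold e. pose proof (p_le_Sm delta i (S m) ltac:(lia)). change (g delta (S m)) with (g delta m + Sm delta (S m) + 1). lia. Qed.

Lemma e_mono delta i a b : i <= a -> a <= b -> e delta i a <= e delta i b.
Proof. intros H1. induction b; intros H. - assert (a = 0) by lia; subst; lia.
  - destruct (Nat.eq_dec a (S b)); [subst; lia|]. pose proof (e_step delta i b ltac:(lia)).
    specialize (IHb ltac:(lia)). lia. Qed.

Lemma alpha_p delta i (Hp : forall m, p delta i m < p delta i (S m)) m :
  i <> 0 -> i <= m -> alpha delta i (p delta i m) = g delta m.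
Proof.
  intros Hi Him. unfold alpha. replace (i =? 0) with false by (symmetry; apply Nat.eqb_neq; auto).
  assert (c delta i (p delta i m) = e delta i m).
  { apply Nat.le_antisymm.
    - unfold c. apply fmax_le. intros a Ha. apply in_map_iff in Ha as [m' [<- Hm']].
      unfold term. destruct (Nat.leb_spec i m'); destruct (Nat.leb_spec (p delta i m') (p delta i m)); simpl; try lia.
      apply e_mono; auto. destruct (le_lt_dec m' m); auto.
      pose proof (p_mono delta i Hp m m' l). lia.
    - unfold c. replace (e delta i m) with (term delta i (p delta i m) m).
      + apply fmax_ge. apply in_map. apply in_seq. pose proof (p_ge delta i Hp m). lia.
      + unfold term. rewrite (proj2 (Nat.leb_le _ _) Him), (proj2 (Nat.leb_le _ _) (Nat.le_refl _)). reflexivity. }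
  rewrite H. unfold e. pose proof (p_le_g delta i m Him). lia.
Qed.

Lemma fip_gen (F : (nat -> Prop) -> Prop) : FIP F -> (exists G, F G) ->
  (forall x, exists G, F G /\ ~ G x) ->
  forall l, (forall G, In G l -> F G) -> forall B, exists y, B <= y /\ forall G, In G l -> G y.
Proof.
  intros HF [G0 HG0] Hx l Hl B.
  set (Gx := fun x => epsilon (inhabits (fun _ : nat => True)) (fun G => F G /\ ~ G x)).
  assert (HGx : forall x, F (Gx x) /\ ~ Gx x x) by (intros x; apply epsilon_spec; auto).
  destruct (HF (G0 :: l ++ map Gx (seq 0 B))) as [y Hy].
  - discriminate.
  - intros D HD. destruct HD as [<-|HD]; auto. apply in_app_or in HD as [HD|HD]; auto.
    apply in_map_iff in HD as [x [<- _]]. apply HGx.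
  - exists y. split.
    + destruct (le_lt_dec B y); auto. exfalso. apply (proj2 (HGx y)). apply (Hy (Gx y)).
      right. apply in_or_app. right. apply in_map. apply in_seq. lia.
    + intros G HG. apply Hy. right. apply in_or_app. left. auto.
Qed.

Lemma inLam_down L k i : inLam L k -> i <= k -> inLam L i.
Proof. destruct L; simpl; lia. Qed.

Lemma Hs_list delta n m : exists l, (forall G, In G l -> gam delta n G) /\
  forall y, (forall G, In G l -> G y) -> Hs delta n m y.
Proof.
  induction m.
  - destruct (classic (gam delta n (enum delta n 0))) as [H|H].
    + exists (enum delta n 0 :: nil). split.
      * intros G [<-|[]]; auto.
      * intros y Hy j Hj _. assert (j = 0) by lia; subst. apply Hy; left; auto.
    + exists nil. split; [intros G []|]. intros y _ j Hj Hg. assert (j = 0) by lia; subst. contradiction.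
  - destruct IHm as [l [Hl Hy]].
    destruct (classic (gam delta n (enum delta n (S m)))) as [H|H].
    + exists (enum delta n (S m) :: l). split.
      * intros G [<-|HG]; auto.
      * intros y Hy' j Hj Hg. destruct (Nat.eq_dec j (S m)).
        -- subst. apply Hy'; left; auto.
        -- apply Hy; [intros G HG; apply Hy'; right; auto| lia | auto].
    + exists l. split; auto. intros y Hy' j Hj Hg. destruct (Nat.eq_dec j (S m)).
      * subst; contradiction.
      * apply Hy; auto; lia.
Qed.

Lemma gam_spec delta n :
  (exists gamma : (nat -> Prop) -> Prop,
       countable_family gamma /\ FIP gamma /\ refines gamma (delta n)) ->
  countable_family (gam delta n) /\ FIP (gam delta n) /\ refines (gam delta n) (delta n).
Proof. intros H. unfold gam. apply epsilon_spec. exact H. Qed.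

Lemma enum_spec delta n :
  countable_family (gam delta n) -> forall G, gam delta n G -> exists k, enum delta n k = G.
Proof. intros H. unfold enum. apply (epsilon_spec (inhabits (fun _ : nat => fun _ : nat => True))
  (fun f => forall G, gam delta n G -> exists k, f k = G)). exact H. Qed.

Lemma Hs_ex delta n :
  ((exists D, delta n D) /\ (forall D, delta n D -> nonempty_set D) /\
     (forall x, exists D, delta n D /\ ~ D x)) ->
  (exists gamma : (nat -> Prop) -> Prop,
       countable_family gamma /\ FIP gamma /\ refines gamma (delta n)) ->
  forall m B, exists y, B <= y /\ Hs delta n m y.
Proof.
  intros [[D0 HD0] [Hne Hx]] Hg m B.
  destruct (gam_spec delta n Hg) as [Hc [Hf Hr]].
  destruct (Hs_list delta n m) as [l [Hl Hy]].
  destruct (fip_gen (gam delta n) Hf) with (l := l) (B := B) as [y [Hy1 Hy2]]; auto.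
  - destruct (Hr D0 HD0 (Hne D0 HD0)) as [G [HG _]]. eauto.
  - intros x. destruct (Hx x) as [D [HD HDx]].
    destruct (Hr D HD (Hne D HD)) as [G [HG [_ HGD]]]. exists G. split; auto.
  - exists y; split; auto.
Qed.

Lemma p_props delta n :
  (forall m B, exists y, B <= y /\ Hs delta n m y) ->
  forall m, Hs delta n m (p delta n m) /\ p delta n m < p delta n (S m).
Proof.
  intros H m.
  assert (A : forall m, Hs delta n m (p delta n m)).
  { intros [|m'].
    - simpl. apply (epsilon_spec (inhabits 0) (fun y => Hs delta n 0 y)).
      destruct (H 0 0) as [y [_ Hy]]; eauto.
    - simpl. apply (epsilon_spec (inhabits 0) (fun y => S (p delta n m') <= y /\ Hs delta n (S m') y)).
      apply H. }
  split; auto.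
  change (p delta n (S m)) with (epsilon (inhabits 0) (fun y => S (p delta n m) <= y /\ Hs delta n (S m) y)).
  apply (epsilon_spec (inhabits 0) (fun y => S (p delta n m) <= y /\ Hs delta n (S m) y)). apply H.
Qed.

Lemma member delta i D :
  i <> 0 ->
  ((exists D, delta i D) /\ (forall D, delta i D -> nonempty_set D) /\
     (forall x, exists D, delta i D /\ ~ D x)) ->
  (exists gamma : (nat -> Prop) -> Prop,
       countable_family gamma /\ FIP gamma /\ refines gamma (delta i)) ->
  delta i D ->
  exists N, forall m, N <= m -> image (alpha delta i) D (g delta m).
Proof.
  intros Hi Hd Hg HD.
  pose proof (p_props delta i (Hs_ex delta i Hd Hg)) as Hp.
  destruct (gam_spec delta i Hg) as [Hc [Hf Hr]].
  destruct Hd as [_ [Hne _]].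
  destruct (Hr D HD (Hne D HD)) as [G [HG [_ HGD]]].
  destruct (enum_spec delta i Hc G HG) as [j Hj].
  exists (j + i). intros m Hm. exists (p delta i m). split.
  - apply HGD. rewrite <- Hj. apply (proj1 (Hp m)); [lia|]. rewrite Hj; auto.
  - apply alpha_p; auto; [intros; apply Hp | lia].
Qed.

Theorem lemma13 (L : option nat) (delta : nat -> (nat -> Prop) -> Prop) :
  ordLam_ok L ->
  (forall n, inLam L n ->
     (exists D, delta n D) /\
     (forall D, delta n D -> nonempty_set D) /\
     (forall x, exists D, delta n D /\ ~ D x)) ->
  FIP (delta 0) ->
  (forall n, inLam L n -> n <> 0 ->
     exists gamma : (nat -> Prop) -> Prop,
       countable_family gamma /\ FIP gamma /\ refines gamma (delta n)) ->
  exists alpha : nat -> nat -> nat,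
    (forall n, inLam L n -> strictly_increasing (alpha n)) /\
    (forall k, inLam L k ->
       forall A : nat -> (nat -> Prop),
         (forall i, i <= k -> exists D, delta i D /\ A i = image (alpha i) D) ->
         infinite_set (fun x => forall i, i <= k -> A i x)).
Proof.
  intros HL Hd HF0 Hg. exists (alpha delta). split.
  - intros n _. apply alpha_strict.
  - intros k Hk A HA.
    assert (Claim : forall k', k' <= k -> exists N, forall m, N <= m ->
               forall i, 1 <= i <= k' -> A i (g delta m)).
    { induction k'; intros Hk'.
      - exists 0. intros; lia.
      - destruct (IHk' ltac:(lia)) as [N1 HN1].
        destruct (HA (S k') Hk') as [D [HD HAD]].
        pose proof (inLam_down L k (S k') Hk Hk') as HinS.
        destruct (member delta (S k') D ltac:(lia) (Hd _ HinS) (Hg _ HinS ltac:(lia)) HD) as [N2 HN2].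
        exists (N1 + N2). intros m Hm i Hi. destruct (Nat.eq_dec i (S k')).
        + subst. rewrite HAD. apply HN2. lia.
        + apply HN1; lia. }
    destruct (Claim k (Nat.le_refl k)) as [N HN].
    assert (H0 : inLam L 0) by (destruct L; simpl in *; lia).
    destruct (HA 0 ltac:(lia)) as [D0 [HD0 HA0]].
    destruct (Hd 0 H0) as [_ [_ Hx0]].
    intros B.
    destruct (fip_gen (delta 0) HF0 (ex_intro _ D0 HD0) Hx0 (D0 :: nil)) with (B := N + B)
      as [m [Hm HmD]].
    { intros G [<-|[]]; auto. }
    exists (g delta m). split.
    + pose proof (g_ge delta m). lia.
    + intros i Hi. destruct (Nat.eq_dec i 0).
      * subst. rewrite HA0. exists m. split; [apply HmD; left; auto|]. reflexivity.
      * apply HN; lia.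
Qed.
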